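(* Let $G=(V,E)$ be a simple cubic bipartite graph that has no potential 4-cycles, let $F_1$ be a 2-factor of $G$ all of whose cycles are chordless, and let $F_2$ be a 2-factor that is locally optimal with respect to $F_1$. Then for every cycle $C$ of $(V,F_1)$ there exists a cycle $D$ of $(V,F_2)$ with $|V(D)|\ge 10$ and $|V(C)\cap V(D)|\ge 4$.
   Context: A 2-factor of a graph $G=(V,E)$ is a set $F\subseteq E$ such that every node is incident to exactly two edges of $F$; the components of $(V,F)$ are simple cycles; for a cycle $C$, $V(C)$ and $E(C)$ denote its node and edge sets. A set $S$ of 4 nodes is a potential 4-cycle if some 2-factor of $G$ has a cycle with node set exactly $S$. For a 2-factor $F_1$, an edge $\{x,y\}$ is a chord of a cycle $C$ of $(V,F_1)$ if $x,y\in V(C)$ and $\{x,y\}\in E\setminus F_1$; $C$ is chordless if it has no chord. A 2-factor $F_2$ is locally optimal with respect to $F_1$ if $E\setminus F_1\subseteq F_2$ and for each cycle $C$ of $(V,F_1)$, the number of components of $(V,F_2\triangle E(C))$ is not smaller than the number of components of $(V,F_2)$ ($\triangle$ is symmetric difference). A graph is cubic if every node has degree exactly 3. *)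

(* Defs.v *)
(* A graph G=(V,E) is a finType T of nodes with a symmetric,
   irreflexive relation e. Edges are 2-element node sets {x,y}. *)
From mathcomp Require Import all_boot.
Set Implicit Arguments. Unset Strict Implicit. Unset Printing Implicit Defensive.

Section Graphs.
Variable T : finType.

Definition simple_graph (e : rel T) : Prop :=
  irreflexive e /\ symmetric e.

Definition edges (e : rel T) : {set {set T}} :=
  [set [set x; y] | x in T, y in T & e x y].

Definition cubic (e : rel T) : Prop :=
  forall x : T, #|[set y | e x y]| = 3.

Definition bipartite (e : rel T) : Prop :=
  exists c : T -> bool, forall x y, e x y -> c x != c y.

Definition adjF (F : {set {set T}}) : rel T := fun x y => [set x; y] \in F.

Definition comp (F : {set {set T}}) (x : T) : {set T} :=
  [set y | connect (adjF F) x y].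

Definition ncomp (F : {set {set T}}) : nat := #|[set comp F x | x : T]|.

(* C is (the node set of) a component / cycle of (V,F) *)
Definition is_cycle_of (F : {set {set T}}) (C : {set T}) : Prop :=
  exists x, C = comp F x.

Definition cycle_edges (F : {set {set T}}) (C : {set T}) : {set {set T}} :=
  [set f in F | f \subset C].

Definition two_factor (e : rel T) (F : {set {set T}}) : Prop :=
  F \subset edges e /\ forall x : T, #|[set f in F | x \in f]| = 2.

Definition potential_4cycle (e : rel T) (S : {set T}) : Prop :=
  #|S| = 4 /\ exists F, two_factor e F /\ is_cycle_of F S.

Definition chordless (e : rel T) (F : {set {set T}}) (C : {set T}) : Prop :=
  forall x y, x \in C -> y \in C -> [set x; y] \in edges e -> [set x; y] \in F.

Definition locally_optimal (e : rel T) (F1 F2 : {set {set T}}) : Prop :=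
  edges e :\: F1 \subset F2 /\
  forall C, is_cycle_of F1 C ->
    ncomp ((F2 :\: cycle_edges F1 C) :|: (cycle_edges F1 C :\: F2)) >= ncomp F2.

End Graphs.

(* Main.v *)
Require Import Defs.
From mathcomp Require Import all_boot fingroup perm zify.
Set Implicit Arguments. Unset Strict Implicit. Unset Printing Implicit Defensive.

Section Restr.
Variables (T : finType) (P : {set T}) (s : {perm T}).
Hypothesis hP : forall x, (s x \in P) = (x \in P).

Definition restr_f x := if x \in P then s x else x.
Lemma restr_inj : injective restr_f.
Proof.
move=> x y; rewrite /restr_f.
case: ifP => hx; case: ifP => hy.
- exact: perm_inj.
- by move=> E; move: hy; rewrite -E hP hx.
- by move=> E; move: hx; rewrite E hP hy.
- by [].
Qed.
Definition restr := perm restr_inj.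

Lemma iter_restr_in x i : x \in P -> iter i restr x = iter i s x.
Proof.
move=> hx; elim: i => [//|i IH] /=; rewrite IH permE /restr_f.
have -> : iter i s x \in P by elim: i {IH} => //= i IH; rewrite hP.
by [].
Qed.

Lemma iter_restr_out x i : x \notin P -> iter i restr x = x.
Proof. by move=> hx; elim: i => //= i ->; rewrite permE /restr_f (negbTE hx). Qed.

Lemma porbit_restr_in x : x \in P -> porbit restr x = porbit s x.
Proof.
move=> hx; apply/setP => y.
by apply/porbitP/porbitP => -[i ->]; exists i; rewrite !permX iter_restr_in.
Qed.

Lemma porbit_restr_out x : x \notin P -> porbit restr x = [set x].
Proof.
move=> hx; apply/setP => y; rewrite inE.
apply/porbitP/eqP => [[i ->]|->]; last by exists 0; rewrite expg0 perm1.
by rewrite permX iter_restr_out.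
Qed.

Lemma porbit_sub x : x \in P -> porbit s x \subset P.
Proof.
move=> hx; apply/subsetP => y /porbitP[i ->]; rewrite permX.
by elim: i => //= i IH; rewrite hP.
Qed.

Lemma card_porbits_restr :
  #|porbits restr| = #|[set porbit s x | x in P]| + #|~: P|.
Proof.
have -> : porbits restr = [set porbit s x | x in P] :|: [set [set x] | x in ~: P].
  apply/setP => O; rewrite /porbits inE.
  apply/imsetP/orP => [[x _ ->]|].
    case hx: (x \in P).
      by left; rewrite porbit_restr_in //; apply/imsetP; exists x.
    by right; rewrite porbit_restr_out ?hx //; apply/imsetP; exists x; rewrite ?inE ?hx.
  case=> /imsetP[x hx ->]; exists x => //.
    by rewrite porbit_restr_in.
  by rewrite porbit_restr_out //; rewrite inE in hx.
rewrite cardsU.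
have -> : [set porbit s x | x in P] :&: [set [set x] | x in ~: P] = set0.
  apply/setP => O; rewrite !inE; apply/negP => /andP[/imsetP[x hx ->] /imsetP[y hy E]].
  have : y \in porbit s x by rewrite E inE.
  by move/(subsetP (porbit_sub hx)); rewrite inE in hy; move/negP: hy.
rewrite cards0 subn0 [in X in _ + X]card_in_imset //.
by move=> x y _ _; apply: set1_inj.
Qed.
End Restr.

Section TwoInv.
Variables (T : finType) (a b : {perm T}) (col : T -> bool) (F : {set {set T}}).
Hypotheses (aK : forall x, a (a x) = x) (bK : forall x, b (b x) = x).
Hypotheses (acol : forall x, col (a x) = ~~ col x) (bcol : forall x, col (b x) = ~~ col x).
Hypothesis hF : forall x y, adjF F x y = (y == a x) || (y == b x).

Let s := (b * a)%g.
Lemma sE x : s x = a (b x). Proof. by rewrite permM. Qed.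

Lemma s_col x : col (s x) = col x.
Proof. by rewrite sE acol bcol negbK. Qed.

Lemma porbit_col x y : y \in porbit s x -> col y = col x.
Proof. by case/porbitP => i ->; rewrite permX; elim: i => //= i IH; rewrite s_col. Qed.

Lemma porbit_s1 x : porbit s (s x) = porbit s x.
Proof. by have := porbit_perm s 1 x; rewrite expg1. Qed.

Lemma porbit_b x z : z \in porbit s x -> b z \in porbit s (b x).
Proof.
case/porbitP => i ->; rewrite permX; elim: i => [|i IH] /=; first exact: porbit_id.
have E : s (b (s (iter i s x))) = b (iter i s x) by rewrite !sE bK aK.
have h1 : porbit s (b (s (iter i s x))) = porbit s (b x).
  by rewrite -porbit_s1 E; apply/eqP; rewrite eq_porbit_mem.
by rewrite -h1 porbit_id.
Qed.


Let Pset z := porbit s z :|: porbit s (b z).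
Lemma PaE z : Pset (a z) = Pset z.
Proof.
rewrite /Pset.
have -> : porbit s (a z) = porbit s (b z) by rewrite -[RHS]porbit_s1 sE bK.
have -> : porbit s (b (a z)) = porbit s z by rewrite -[LHS]porbit_s1 sE bK aK.
by rewrite setUC.
Qed.
Lemma PbE z : Pset (b z) = Pset z.
Proof. by rewrite /Pset bK setUC. Qed.

Lemma connect_step w : connect (adjF F) w (s w).
Proof.
apply: (@connect_trans _ _ (b w)); apply: connect1; rewrite hF.
  by rewrite eqxx orbT.
by rewrite sE eqxx.
Qed.

Lemma connect_orbit x y : y \in porbit s x -> connect (adjF F) x y.
Proof.
case/porbitP => i ->; rewrite permX; elim: i => [|i IH] /=; first exact: connect0.
exact: connect_trans IH (connect_step _).
Qed.

Lemma comp_eq x : Defs.comp F x = porbit s x :|: porbit s (b x).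
Proof.
apply/setP => y; rewrite inE; apply/idP/idP.
  case/connectP => p hp ->; elim: p x hp => [|z p IH] x /=.
    by move=> _; rewrite inE porbit_id.
  case/andP => hxz hp.
  have E : Pset z = Pset x by rewrite hF in hxz; case/orP: hxz => /eqP ->; [exact: PaE|exact: PbE].
  by rewrite -/(Pset x) -E; apply: IH.
case/setUP => hy; first exact: connect_orbit.
apply: (@connect_trans _ _ (b x)); last exact: connect_orbit.
by apply: connect1; rewrite hF eqxx orbT.
Qed.

Lemma orbit_disj x : [disjoint porbit s x & porbit s (b x)].
Proof.
apply/pred0P => y /=; apply/negP => /andP[h1 h2].
by move: (porbit_col h1) (porbit_col h2); rewrite bcol => ->; case: (col x).
Qed.

Lemma card_orbit_b x : #|porbit s x| <= #|porbit s (b x)|.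
Proof.
rewrite -(card_imset _ (@perm_inj _ b)); apply: subset_leq_card.
by apply/subsetP => z /imsetP[y hy ->]; apply: porbit_b.
Qed.

Lemma card_comp x : 2 * #|porbit s x| <= #|Defs.comp F x|.
Proof.
rewrite comp_eq cardsU (disjoint_setI0 (orbit_disj x)) cards0 subn0.
by have := card_orbit_b x; lia.
Qed.

Lemma cardC_comp (C : {set T}) x : (forall z, (b z \in C) = (z \in C)) ->
  2 * #|C :&: porbit s x| <= #|C :&: Defs.comp F x|.
Proof.
move=> hC; rewrite comp_eq setIUr cardsU.
have -> : (C :&: porbit s x) :&: (C :&: porbit s (b x)) = set0.
  by rewrite setIACA setIid (disjoint_setI0 (orbit_disj x)) setI0.
rewrite cards0 subn0.
suff : #|C :&: porbit s x| <= #|C :&: porbit s (b x)| by lia.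
rewrite -(card_imset _ (@perm_inj _ b)); apply: subset_leq_card.
apply/subsetP => z /imsetP[y]; rewrite inE => /andP[h1 h2] ->.
by rewrite inE hC h1 porbit_b.
Qed.

Lemma compI x : ~~ col x -> Defs.comp F x :&: [set y | ~~ col y] = porbit s x.
Proof.
move=> hx; rewrite comp_eq setIUl.
have -> : porbit s (b x) :&: [set y | ~~ col y] = set0.
  apply/setP => y; rewrite !inE; apply/negP => /andP[/porbit_col]; rewrite bcol => ->.
  by rewrite hx.
rewrite setU0; apply/setIidPl/subsetP => y /porbit_col; by rewrite inE => ->.
Qed.

Lemma ncomp_eq : ncomp F = #|[set porbit s x | x in [set y | ~~ col y]]|.
Proof.
have E1 : [set Defs.comp F x | x : T] = [set Defs.comp F x | x in [set y | ~~ col y]].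
  apply/setP => D; apply/imsetP/imsetP => -[x hx ->]; last by exists x.
  case hc : (col x); last by exists x; rewrite ?inE ?hc.
  exists (b x); first by rewrite inE bcol hc.
  by rewrite !comp_eq bK setUC.
have E2 : [set porbit s x | x in [set y | ~~ col y]] =
   [set D :&: [set y | ~~ col y] | D in [set Defs.comp F x | x in [set y | ~~ col y]]].
  rewrite -imset_comp; apply: eq_in_imset => x; rewrite inE => hx /=.
  by rewrite compI.
rewrite /ncomp E1 E2; symmetry; apply: card_in_imset.
move=> D1 D2 /imsetP[x hx ->] /imsetP[y hy ->]; rewrite inE in hx; rewrite inE in hy.
rewrite !compI // => E.
have hyx : y \in porbit s x by rewrite E porbit_id.
rewrite !comp_eq E.
have -> : porbit s (b x) = porbit s (b y) by apply/esym/eqP; rewrite eq_porbit_mem; exact: porbit_b hyx.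
by [].
Qed.
End TwoInv.

Section Generic2.
Variable T : finType.

Lemma card_fib (D : {set T}) (f : T -> {set T}) :
  #|D| = \sum_(O in f @: D) #|[set y in D | f y == O]|.
Proof.
rewrite -sum1_card (partition_big_imset f); apply: eq_bigr => O _.
by rewrite sum1dep_card.
Qed.

Lemma iter_agree (s t : {perm T}) (C : {set T}) x i :
  (forall z, z \notin C -> t z = s z) -> [disjoint porbit s x & C] ->
  iter i t x = iter i s x.
Proof.
move=> hst hd; elim: i => //= i ->; apply: hst.
have : iter i s x \in porbit s x by rewrite -permX mem_porbit.
by move=> h; apply/negP => hc; move/pred0P: hd => /(_ (iter i s x)) /=; rewrite h hc.
Qed.

Lemma porbit_agree (s t : {perm T}) (C : {set T}) x :
  (forall z, z \notin C -> t z = s z) -> [disjoint porbit s x & C] ->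
  porbit t x = porbit s x.
Proof.
move=> hst hd; apply/setP => y.
apply/porbitP/porbitP => -[i ->]; exists i; by rewrite !permX (iter_agree i hst hd).
Qed.

Lemma split_card (s : {perm T}) (W C : {set T}) (hW : forall x, (s x \in W) = (x \in W)) :
  #|[set porbit s x | x in W]| = #|[set porbit s x | x in C :&: W]| +
     #|[set porbit s x | x in [set x in W | [disjoint porbit s x & C]]]|.
Proof.
have -> : [set porbit s x | x in W] = [set porbit s x | x in C :&: W] :|:
     [set porbit s x | x in [set x in W | [disjoint porbit s x & C]]].
  apply/setP => O; rewrite inE; apply/imsetP/orP => [[x hx ->]|].
    case hd: [disjoint porbit s x & C].
      by right; apply/imsetP; exists x; rewrite // inE hx hd.
    left; move/negbT: hd => /pred0Pn [z /andP [hz1 hz2]].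
    apply/imsetP; exists z.
      by rewrite inE; apply/andP; split; [exact: hz2 | apply: (subsetP (porbit_sub hW hx))].
    by apply/esym/eqP; rewrite eq_porbit_mem.
  case=> /imsetP [x]; rewrite inE => /andP[h1 h2] ->; by exists x.
rewrite cardsU.
have -> : [set porbit s x | x in C :&: W] :&:
     [set porbit s x | x in [set x in W | [disjoint porbit s x & C]]] = set0.
  apply/setP => O; rewrite !inE; apply/negP => /andP[/imsetP[x hx ->] /imsetP[y hy E]].
  rewrite !inE in hx hy; case/andP: hx => hxC _; case/andP: hy => _ hd.
  move/pred0P: hd => /(_ x) /=; rewrite hxC andbT -E porbit_id //.
by rewrite cards0 subn0.
Qed.

Lemma porbit2 (s : {perm T}) w : s (s w) = w -> porbit s w = [set w; s w].
Proof.
move=> h; apply/setP => y; rewrite !inE; apply/porbitP/idP => [[i ->]|].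
  rewrite permX; elim: i => [|i IH] /=; first by rewrite eqxx.
  by move: IH => /orP[] /eqP ->; rewrite ?h eqxx ?orbT.
by case/orP => /eqP ->; [exists 0; rewrite expg0 perm1 | exists 1; rewrite expg1].
Qed.
End Generic2.

Section Edges.
Variables (T : finType) (e : rel T).
Hypotheses (eirr : irreflexive e) (esy : symmetric e).

Lemma edgeE x y : ([set x; y] \in edges e) = e x y.
Proof.
apply/idP/idP => [|h]; last by apply/imset2P; exists x y => //; rewrite inE.
case/imset2P => a b _; rewrite inE => hab E.
have hx : x \in [set a; b] by rewrite -E set21.
have hy : y \in [set a; b] by rewrite -E set22.
have ha : a \in [set x; y] by rewrite E set21.
have hb : b \in [set x; y] by rewrite E set22.
rewrite !inE in hx hy ha hb.
case/orP: hx => /eqP hx; case/orP: hy => /eqP hy; subst.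
- by case/orP: hb => /eqP hb; subst; rewrite eirr in hab.
- by [].
- by rewrite esy.
- by case/orP: ha => /eqP ha; subst; rewrite eirr in hab.
Qed.

Lemma adjF_sym (F : {set {set T}}) x y : adjF F x y = adjF F y x.
Proof. by rewrite /adjF setUC. Qed.

Variable F : {set {set T}}.
Hypothesis Fsub : F \subset edges e.

Lemma adj_e x y : adjF F x y -> e x y.
Proof. by move=> h; rewrite -edgeE; apply: (subsetP Fsub). Qed.

Lemma deg_eq x : #|[set f in F | x \in f]| = #|[set y | adjF F x y]|.
Proof.
have -> : [set f in F | x \in f] = [set [set x; y] | y in [set y | adjF F x y]].
  apply/setP => f; rewrite inE; apply/andP/imsetP => [[hf hx]|[y hy ->]].
    have := subsetP Fsub _ hf; case/imset2P => a b _ _ E; subst f.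
    rewrite !inE in hx; case/orP: hx => /eqP hx; subst.
      by exists b; rewrite // inE.
    by exists a; rewrite ?inE /adjF setUC.
  by rewrite inE in hy; split; rewrite // set21.
apply: card_in_imset => y1 y2; rewrite !inE => h1 h2 E.
have : y1 \in [set x; y2] by rewrite -E set22.
rewrite !inE; case/orP => /eqP // ?; subst.
by have := adj_e h1; rewrite eirr.
Qed.
End Edges.

Lemma unique_pick (T : finType) (P : pred T) x0 :
  #|[set y | P y]| = 1 ->
  P (odflt x0 [pick y | P y]) /\ forall y, P y -> y = odflt x0 [pick y | P y].
Proof.
move/eqP/cards1P => [z hz].
have hPz : forall y, P y = (y == z) by move=> y; rewrite -in_set1 -hz inE.
case: pickP => [y hy|none]; last by have := none z; rewrite hPz eqxx.
by split => // w; rewrite !hPz in hy * => /eqP -> ; rewrite (eqP hy).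
Qed.

Section Main.
Variables (T : finType) (e : rel T) (F1 F2 : {set {set T}}) (col : T -> bool).
Hypotheses (eirr : irreflexive e) (esy : symmetric e) (ecub : cubic e).
Hypothesis ecol : forall x y, e x y -> col x != col y.
Hypotheses (tf1 : two_factor e F1) (tf2 : two_factor e F2).
Hypothesis Msub : edges e :\: F1 \subset F2.

Lemma colE x y : e x y -> col y = ~~ col x.
Proof. by move/ecol; case: (col x); case: (col y). Qed.

Lemma nbr2 F : two_factor e F -> forall x, #|[set y | adjF F x y]| = 2.
Proof. by case=> hs hd x; rewrite -(deg_eq eirr esy hs) hd. Qed.

Lemma adj1_e x y : adjF F1 x y -> e x y. Proof. exact: (adj_e eirr esy tf1.1). Qed.
Lemma adj2_e x y : adjF F2 x y -> e x y. Proof. exact: (adj_e eirr esy tf2.1). Qed.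

Definition muf x := odflt x [pick y | e x y && ~~ adjF F1 x y].
Lemma muf_spec x : (e x (muf x) && ~~ adjF F1 x (muf x)) /\
   forall y, e x y && ~~ adjF F1 x y -> y = muf x.
Proof.
apply: unique_pick.
have -> : [set y | e x y && ~~ adjF F1 x y] = [set y | e x y] :\: [set y | adjF F1 x y].
  by apply/setP => y; rewrite !inE andbC.
rewrite cardsD (setIidPr _); first by rewrite ecub nbr2.
by apply/subsetP => y; rewrite !inE; apply: adj1_e.
Qed.
Lemma muf_e x : e x (muf x). Proof. by case/andP: (muf_spec x).1. Qed.
Lemma muf_nadj x : ~~ adjF F1 x (muf x). Proof. by case/andP: (muf_spec x).1. Qed.
Lemma muf_uniq x y : e x y -> ~~ adjF F1 x y -> y = muf x.
Proof. by move=> h1 h2; apply: (muf_spec x).2; rewrite h1 h2. Qed.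
Lemma mufK : cancel muf muf.
Proof.
move=> x; apply/esym/muf_uniq; first by rewrite esy muf_e.
by rewrite adjF_sym muf_nadj.
Qed.
Definition mu := perm (can_inj mufK).
Lemma muE x : mu x = muf x. Proof. by rewrite permE. Qed.

Lemma adj2_mu x : adjF F2 x (mu x).
Proof.
rewrite muE; apply: (subsetP Msub); rewrite inE; apply/andP; split.
  exact: muf_nadj.
by rewrite (edgeE eirr esy) muf_e.
Qed.

Definition nuf x := odflt x [pick y | adjF F2 x y && (y != mu x)].
Lemma nuf_spec x : (adjF F2 x (nuf x) && (nuf x != mu x)) /\
   forall y, adjF F2 x y && (y != mu x) -> y = nuf x.
Proof.
apply: unique_pick.
have -> : [set y | adjF F2 x y && (y != mu x)] = [set y | adjF F2 x y] :\ mu x.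
  by apply/setP => y; rewrite !inE andbC.
have := cardsD1 (mu x) [set y | adjF F2 x y].
by rewrite nbr2 // inE adj2_mu => -[].
Qed.
Lemma nuf_adj x : adjF F2 x (nuf x). Proof. by case/andP: (nuf_spec x).1. Qed.
Lemma nuf_mu x : nuf x != mu x. Proof. by case/andP: (nuf_spec x).1. Qed.
Lemma nuf_adj1 x : adjF F1 x (nuf x).
Proof.
apply/negPn/negP => h; move: (nuf_mu x); rewrite muE.
by rewrite -(muf_uniq (adj2_e (nuf_adj x)) h) eqxx.
Qed.
Lemma mu_inv x : mu (mu x) = x. Proof. by rewrite !muE mufK. Qed.
Lemma nufK : cancel nuf nuf.
Proof.
move=> x; apply/esym/(nuf_spec (nuf x)).2; rewrite adjF_sym nuf_adj /=.
apply/negP => /eqP h; have := congr1 mu h; rewrite mu_inv => E.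
by move: (nuf_mu x); rewrite E eqxx.
Qed.
Definition nu := perm (can_inj nufK).
Lemma nuE x : nu x = nuf x. Proof. by rewrite permE. Qed.
Lemma nu_inv x : nu (nu x) = x. Proof. by rewrite !nuE nufK. Qed.
Lemma nu_adj1 x : adjF F1 x (nu x). Proof. by rewrite nuE nuf_adj1. Qed.
Lemma nu_mu x : nu x != mu x. Proof. by rewrite nuE nuf_mu. Qed.

Lemma adj2E x y : adjF F2 x y = (y == mu x) || (y == nu x).
Proof.
apply/idP/idP => [h|]; last by case/orP => /eqP ->; rewrite ?adj2_mu ?nuE ?nuf_adj.
case: eqP => //= /eqP hm; rewrite nuE; apply/eqP/(nuf_spec x).2.
by rewrite h hm.
Qed.

Definition betaf x := odflt x [pick y | adjF F1 x y && (y != nu x)].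
Lemma betaf_spec x : (adjF F1 x (betaf x) && (betaf x != nu x)) /\
   forall y, adjF F1 x y && (y != nu x) -> y = betaf x.
Proof.
apply: unique_pick.
have -> : [set y | adjF F1 x y && (y != nu x)] = [set y | adjF F1 x y] :\ nu x.
  by apply/setP => y; rewrite !inE andbC.
have := cardsD1 (nu x) [set y | adjF F1 x y].
by rewrite nbr2 // inE nu_adj1 => -[].
Qed.
Lemma betaf_adj x : adjF F1 x (betaf x). Proof. by case/andP: (betaf_spec x).1. Qed.
Lemma betaf_nu x : betaf x != nu x. Proof. by case/andP: (betaf_spec x).1. Qed.
Lemma betafK : cancel betaf betaf.
Proof.
move=> x; apply/esym/(betaf_spec (betaf x)).2; rewrite adjF_sym betaf_adj /=.
apply/negP => /eqP h; have := congr1 nu h; rewrite nu_inv => E.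
by move: (betaf_nu x); rewrite E eqxx.
Qed.
Definition beta := perm (can_inj betafK).
Lemma betaE x : beta x = betaf x. Proof. by rewrite permE. Qed.
Lemma beta_inv x : beta (beta x) = x. Proof. by rewrite !betaE betafK. Qed.
Lemma beta_nu x : beta x != nu x. Proof. by rewrite betaE betaf_nu. Qed.

Lemma adj1E x y : adjF F1 x y = (y == nu x) || (y == beta x).
Proof.
apply/idP/idP => [h|]; last by case/orP => /eqP ->; rewrite ?nu_adj1 ?betaE ?betaf_adj.
case: eqP => //= /eqP hm; rewrite betaE; apply/eqP/(betaf_spec x).2.
by rewrite h hm.
Qed.

Lemma beta_mu x : beta x != mu x.
Proof.
apply/eqP => h; have := muf_nadj x; rewrite -muE -h.
by rewrite adj1E eqxx orbT.
Qed.

Lemma mu_col x : col (mu x) = ~~ col x. Proof. by apply: colE; rewrite muE muf_e. Qed.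
Lemma nu_col x : col (nu x) = ~~ col x. Proof. by apply: colE; apply: adj1_e; apply: nu_adj1. Qed.
Lemma beta_col x : col (beta x) = ~~ col x.
Proof. by apply: colE; apply: adj1_e; rewrite adj1E eqxx orbT. Qed.

Variables (C : {set T}) (x0 : T).
Hypothesis hC : C = Defs.comp F1 x0.
Hypothesis chl : chordless e F1 C.

Lemma C_adj y z : adjF F1 y z -> (z \in C) = (y \in C).
Proof.
move=> h; rewrite hC !inE; apply/idP/idP => hc.
  by apply: (@connect_trans _ _ z) => //; apply: connect1; rewrite adjF_sym.
by apply: (@connect_trans _ _ y) => //; apply: connect1.
Qed.
Lemma nu_C y : (nu y \in C) = (y \in C). Proof. by apply: C_adj; apply: nu_adj1. Qed.
Lemma beta_C y : (beta y \in C) = (y \in C).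
Proof. by apply: C_adj; rewrite adj1E eqxx orbT. Qed.
Lemma mu_notC y : y \in C -> mu y \notin C.
Proof.
move=> hy; apply/negP => hm.
have := chl hy hm; rewrite (edgeE eirr esy) muE muf_e => /(_ isT) h.
by move: (muf_nadj y); rewrite /adjF h.
Qed.

Definition nu'f x := if x \in C then beta x else nu x.
Lemma nu'fK : cancel nu'f nu'f.
Proof.
move=> x; rewrite /nu'f; case hx: (x \in C).
  by rewrite beta_C hx beta_inv.
by rewrite nu_C hx nu_inv.
Qed.
Definition nu' := perm (can_inj nu'fK).
Lemma nu'E x : nu' x = if x \in C then beta x else nu x. Proof. by rewrite permE. Qed.
Lemma nu'_inv x : nu' (nu' x) = x. Proof. by rewrite !permE nu'fK. Qed.
Lemma nu'_col x : col (nu' x) = ~~ col x.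
Proof. by rewrite nu'E; case: ifP => _; rewrite ?beta_col ?nu_col. Qed.

Definition F2' := (F2 :\: cycle_edges F1 C) :|: (cycle_edges F1 C :\: F2).

Lemma adj2'E x y : adjF F2' x y = (y == mu x) || (y == nu' x).
Proof.
rewrite /adjF /F2' /cycle_edges !inE subUset !sub1set.
change ([set x; y] \in F1) with (adjF F1 x y).
change ([set x; y] \in F2) with (adjF F2 x y).
rewrite adj1E adj2E nu'E.
have h1 := nu_mu x; have h2 := beta_nu x; have h3 := beta_mu x.
case hx: (x \in C) => /=.
  case: (y =P mu x) => [->|hm] /=.
    by rewrite (negbTE (mu_notC hx)) !andbF.
  case: (y =P nu x) => [->|hn] /=.
    by rewrite nu_C hx (eq_sym (nu x)) (negbTE h2).
  case: (y =P beta x) => [->|hb] //=.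
  by rewrite beta_C hx.
by rewrite !andbF /= orbF.
Qed.

Lemma two_factor2' : two_factor e F2'.
Proof.
have sub : F2' \subset edges e.
    apply/subsetP => f; rewrite /F2' /cycle_edges !inE => /orP[/andP[_ h]|/andP[_ /andP[h _]]].
      exact: (subsetP tf2.1).
    exact: (subsetP tf1.1).
split => // x.
  rewrite (deg_eq eirr esy sub).
  have -> : [set y | adjF F2' x y] = [set mu x; nu' x].
    by apply/setP => y; rewrite !inE adj2'E.
  rewrite cards2; case: (mu x =P nu' x) => // h.
  have := muf_nadj x; rewrite -muE h adj1E nu'E.
  by case: ifP => _; rewrite eqxx ?orbT.
Qed.

Local Notation sigma := (nu * mu)%g.
Local Notation sigma' := (nu' * mu)%g.
Local Notation s1 := (beta * nu)%g.
Local Notation W := [set y | ~~ col y].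
Local Notation CW := (C :&: [set y | ~~ col y]).

Lemma sigmaE x : sigma x = mu (nu x). Proof. by rewrite permM. Qed.
Lemma sigma'E x : sigma' x = mu (nu' x). Proof. by rewrite permM. Qed.
Lemma s1E x : s1 x = nu (beta x). Proof. by rewrite permM. Qed.

Lemma K1 x : x \in C -> sigma x \notin C.
Proof. by move=> hx; rewrite sigmaE; apply: mu_notC; rewrite nu_C. Qed.
Lemma sig'_out x : x \notin C -> sigma' x = sigma x.
Proof. by move=> hx; rewrite sigmaE sigma'E nu'E (negbTE hx). Qed.
Lemma sig'_in x : x \in C -> sigma' x = sigma (s1 x).
Proof. by move=> hx; rewrite sigmaE sigma'E s1E nu_inv nu'E hx. Qed.
Lemma sigma_col x : col (sigma x) = col x.
Proof. by rewrite sigmaE mu_col nu_col negbK. Qed.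
Lemma sigma'_col x : col (sigma' x) = col x.
Proof. by rewrite sigma'E mu_col nu'_col negbK. Qed.
Lemma iter_sigma_col i x : col (iter i sigma x) = col x.
Proof. by elim: i => //= i IH; rewrite sigma_col. Qed.

Hypothesis Hneg : forall x, 10 <= #|Defs.comp F2 x| -> #|C :&: Defs.comp F2 x| < 4.
Hypothesis no4 : forall S : {set T}, ~ potential_4cycle e S.

Lemma K2 x : 2 <= #|C :&: porbit sigma x| -> #|porbit sigma x| <= 4.
Proof.
move=> h; rewrite leqNgt; apply/negP => h5.
have c1 := @card_comp _ mu nu col F2 mu_inv nu_inv mu_col nu_col adj2E x.
have c2 := @cardC_comp _ mu nu col F2 mu_inv nu_inv mu_col nu_col adj2E C x nu_C.
have h10 : 10 <= #|Defs.comp F2 x| by lia.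
have := Hneg h10; lia.
Qed.

Lemma K3 u y : u \in C -> y \in porbit sigma u -> y \in C -> y != u ->
  y = iter 2 sigma u.
Proof.
move=> hu hy hyC hyu.
have h2 : 2 <= #|C :&: porbit sigma u|.
  have <- : #|[set u; y]| = 2 by rewrite cards2 eq_sym hyu.
  apply: subset_leq_card; apply/subsetP => z; rewrite !inE.
  by case/orP => /eqP ->; rewrite ?hu ?porbit_id ?hyC ?hy.
have h4 := K2 h2.
have hit := iter_porbit sigma u.
move: hy; rewrite porbit_traject => /trajectP [i hi Ey]; subst y.
move: h4 hi hit hyC hyu; move: #|porbit sigma u| => n h4 hi hit hyC hyu.
have hs := K1 hu.
have hi0 : i != 0 by apply: contraNneq hyu => ->.
have [Ei|[[Ei En]|[[Ei En]|[Ei En]]]] :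
    i = 1 \/ (i = 2 /\ n = 3) \/ (i = 2 /\ n = 4) \/ (i = 3 /\ n = 4) by lia.
- by subst i; move: hyC; rewrite /= (negbTE hs).
- subst i n; move: hit => /= hit.
  by have := K1 hyC; rewrite /= hit hu.
- by subst i.
- subst i n; move: hit => /= hit.
  by have := K1 hyC; rewrite /= hit hu.
Qed.

Lemma sig'_swap z : sigma' (nu' (sigma' z)) = nu' z.
Proof. by rewrite !sigma'E nu'_inv mu_inv. Qed.

Lemma K5 x : sigma' (sigma' x) = x -> sigma' x != x -> False.
Proof.
move=> h2 hne; set y := sigma' x in h2 hne.
have E1 : porbit sigma' x = [set x; y] by apply: porbit2.
have hyx : sigma' (nu' x) = nu' y by rewrite -{1}h2 sig'_swap.
have hxy : sigma' (nu' y) = nu' x by rewrite /y sig'_swap.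
have E2 : porbit sigma' (nu' x) = [set nu' x; nu' y].
  by rewrite porbit2 hyx // hxy.
apply: (no4 (S := Defs.comp F2' x)); split; last first.
  by exists F2'; split; [exact: two_factor2' | exists x].
rewrite (@comp_eq _ mu nu' F2' mu_inv nu'_inv adj2'E) E1 E2 cardsU.
have -> : [set x; y] :&: [set nu' x; nu' y] = set0.
  have cy : col y = col x by rewrite /y sigma'_col.
  apply/setP => z; rewrite !inE; apply/negP => /andP[/orP[] /eqP -> /orP[] /eqP E].
  - by move: (nu'_col x); rewrite -E; case: (col x).
  - by move: (nu'_col y); rewrite -E cy; case: (col x).
  - by move: (nu'_col x); rewrite -E cy; case: (col x).
  - by move: (nu'_col y); rewrite -E; case: (col y).
rewrite cards0 subn0 !cards2 eq_sym hne (inj_eq perm_inj) eq_sym hne.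
by [].
Qed.

Lemma K4 x : x \in C -> ~~ col x ->
  exists y, [/\ y \in C, ~~ col y, y != x & y \in porbit sigma' x].
Proof.
move=> hx cx.
set u := s1 x.
have hu : u \in C by rewrite /u s1E nu_C beta_C.
have cu : col u = col x by rewrite /u s1E nu_col beta_col negbK.
have hux : u != x.
  apply/eqP => E; have := congr1 nu E; rewrite /u s1E nu_inv => E'.
  by move: (beta_nu x); rewrite E' eqxx.
have hsx : sigma' x = sigma u by rewrite sig'_in.
have hsu := K1 hu.
case: (boolP [exists y, [&& y \in porbit sigma u, y \in C & y != u]]).
  case/existsP => y /and3P [h1 h2 h3].
  have Ey := K3 hu h1 h2 h3.
  have h22 : iter 2 sigma' x = y by rewrite Ey /= hsx sig'_out.
  case: (y =P x) => [Eyx|Nyx].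
    exfalso; apply: (@K5 x).
      by move: h22; rewrite Eyx.
    by rewrite hsx; apply/eqP => E; move: hsu; rewrite E hx.
  exists y; split => //.
  - by rewrite Ey iter_sigma_col cu.
  - exact/eqP.
  - by rewrite -h22 -permX mem_porbit.
move/existsPn => hA.
have hA' : forall y, y \in porbit sigma u -> y \in C -> y = u.
  move=> y h1 h2; move: (hA y); rewrite h1 h2 /= => /negPn /eqP //.
have claim : forall j, iter j.+1 sigma' x = iter j.+1 sigma u \/ u \in porbit sigma' x.
  elim=> [|j IH]; first by left.
  case: IH => [IH|]; last by right.
  set w := iter j.+1 sigma u in IH.
  have hw : w \in porbit sigma u by rewrite /w -permX mem_porbit.
  case hwC : (w \in C).
    by right; rewrite -(hA' w hw hwC) -IH -permX mem_porbit.
  by left; rewrite [LHS]iterS IH sig'_out ?hwC.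
have hn := card_porbit_neq0 sigma u.
have hit := iter_porbit sigma u.
move: hn hit; case: #|porbit sigma u| => // n _ hit.
exists u; split => //; first by rewrite cu.
by case: (claim n) => //; rewrite hit => <-; rewrite -permX mem_porbit.
Qed.

Lemma fib_le O : O \in [set porbit sigma x | x in CW] ->
  #|[set y in CW | porbit sigma y == O]| <= 2.
Proof.
case/imsetP => x1; rewrite inE => /andP[hx1 _] ->.
apply: (@leq_trans #|[set x1; iter 2 sigma x1]|); last by rewrite cards2; case: (_ != _).
apply: subset_leq_card; apply/subsetP => y; rewrite !inE => /andP[/andP[hy _]].
rewrite eq_porbit_mem => hyo.
case: (y =P x1) => [->|/eqP ne]; first by rewrite ?eqxx.
by rewrite (K3 hx1 hyo hy ne) eqxx orbT.
Qed.

Lemma fib_ge O : O \in [set porbit sigma' x | x in CW] ->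
  2 <= #|[set y in CW | porbit sigma' y == O]|.
Proof.
case/imsetP => x1; rewrite inE => /andP[hx1]; rewrite inE => cx1 ->.
have [y [hy cy ne hyo]] := K4 hx1 cx1.
have <- : #|[set x1; y]| = 2 by rewrite cards2 eq_sym ne.
apply: subset_leq_card; apply/subsetP => z; rewrite !inE.
case/orP => /eqP ->; rewrite ?hx1 ?cx1 ?eqxx ?hy ?cy //=.
by rewrite eq_porbit_mem.
Qed.

Lemma m_le : #|CW| <= 2 * #|[set porbit sigma x | x in CW]|.
Proof.
rewrite (card_fib CW (porbit sigma)).
apply: (@leq_trans (\sum_(O in [set porbit sigma x | x in CW]) 2)).
  by apply: leq_sum => O hO; apply: fib_le.
by rewrite sum_nat_const mulnC.
Qed.

Lemma m_ge : 2 * #|[set porbit sigma' x | x in CW]| <= #|CW|.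
Proof.
rewrite (card_fib CW (porbit sigma')).
apply: (@leq_trans (\sum_(O in [set porbit sigma' x | x in CW]) 2)).
  by rewrite sum_nat_const mulnC.
by apply: leq_sum => O hO; apply: fib_ge.
Qed.

Lemma hWs x : (sigma x \in W) = (x \in W). Proof. by rewrite !inE sigma_col. Qed.
Lemma hWs' x : (sigma' x \in W) = (x \in W). Proof. by rewrite !inE sigma'_col. Qed.
Lemma hCW x : (s1 x \in CW) = (x \in CW).
Proof. by rewrite !inE s1E nu_C beta_C nu_col beta_col negbK. Qed.

Lemma A0_eq : [set porbit sigma x | x in [set x in W | [disjoint porbit sigma x & C]]] =
   [set porbit sigma' x | x in [set x in W | [disjoint porbit sigma' x & C]]].
Proof.
have ag1 : forall z, z \notin C -> sigma' z = sigma z by move=> z; apply: sig'_out.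
have ag2 : forall z, z \notin C -> sigma z = sigma' z by move=> z hz; rewrite sig'_out.
have Ed : forall x, [disjoint porbit sigma x & C] = [disjoint porbit sigma' x & C].
  move=> x; apply/idP/idP => hd.
    by rewrite (porbit_agree ag1 hd).
  by rewrite (porbit_agree ag2 hd).
have -> : [set x in W | [disjoint porbit sigma x & C]] =
          [set x in W | [disjoint porbit sigma' x & C]].
  by apply/setP => x; rewrite !inE Ed.
apply: eq_in_imset => x; rewrite !inE => /andP[_ hd].
by rewrite (porbit_agree ag2 hd).
Qed.

Lemma kappa1 : #|[set porbit s1 x | x in CW]| = 1.
Proof.
have [x1 hx1] : exists x1, x1 \in CW.
  have h0 : x0 \in C by rewrite hC inE connect0.
  case c0 : (col x0); last by exists x0; rewrite !inE h0 c0.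
  by exists (nu x0); rewrite !inE nu_C h0 nu_col c0.
apply/eqP/cards1P; exists (porbit s1 x1); apply/setP => O; rewrite inE.
apply/imsetP/eqP => [[y hy ->]|->]; last by exists x1.
move: hx1 hy; rewrite !inE => /andP[h1 c1] /andP[h2 c2].
have hc : y \in Defs.comp F1 x1.
  move: h1 h2; rewrite hC !inE => h1 h2.
  apply: (@connect_trans _ _ x0) => //.
  by rewrite (sym_connect_sym (@adjF_sym _ F1)).
rewrite (@comp_eq _ nu beta F1 nu_inv beta_inv adj1E) inE in hc.
case/orP: hc => hc.
  by apply/eqP; rewrite eq_porbit_mem.
move: (@porbit_col _ nu beta col nu_col beta_col _ _ hc); rewrite beta_col.
by move: c1 c2; case: (col y); case: (col x1).
Qed.

Lemma tau_eq : restr hWs' = (restr hCW * restr hWs)%g.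
Proof.
apply/permP => x; rewrite permM !permE /restr_f !in_setI !in_set.
case cx : (col x) => /=; first by rewrite andbF /= cx.
rewrite andbT; case hx : (x \in C) => /=.
  by rewrite s1E nu_col beta_col cx /= sig'_in // s1E.
by rewrite cx /= sig'_out ?hx.
Qed.

Lemma parity : (#|[set porbit sigma' x | x in W]| + #|[set porbit sigma x | x in W]| + #|CW|) %% 2 = 1.
Proof.
have := odd_permM (restr hCW) (restr hWs).
rewrite -tau_eq /odd_perm !card_porbits_restr kappa1 -!oddD.
have := cardsC CW.
move: #|[set porbit sigma' x | x in W]| #|[set porbit sigma x | x in W]| #|CW| => a b c.
move: #|~: CW| #|~: W| #|T| => q w t hq.
move=> /(congr1 nat_of_bool); rewrite -!modn2.
lia.
Qed.

Lemma final : ncomp F2 <= ncomp F2' -> False.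
Proof.
rewrite (@ncomp_eq _ mu nu col F2 mu_inv nu_inv mu_col nu_col adj2E).
rewrite (@ncomp_eq _ mu nu' col F2' mu_inv nu'_inv mu_col nu'_col adj2'E).
have E1 := split_card C hWs; have E2 := split_card C hWs'.
rewrite A0_eq in E1.
have := m_le; have := m_ge; have := parity.
lia.
Qed.
End Main.

Unset Implicit Arguments.
Set Strict Implicit.

Theorem lemma3 (T : finType) (e : rel T) (F1 F2 : {set {set T}}) :
  simple_graph e -> cubic e -> bipartite e ->
  (forall S : {set T}, ~ potential_4cycle e S) ->
  two_factor e F1 ->
  (forall C, is_cycle_of F1 C -> chordless e F1 C) ->
  two_factor e F2 ->
  locally_optimal e F1 F2 ->
  forall C, is_cycle_of F1 C ->
    exists D, is_cycle_of F2 D /\ 10 <= #|D| /\ 4 <= #|C :&: D|.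
Proof.
move=> [eirr esy] ecub [col hcol] no4 tf1 hchl tf2 [Msub lo] C hcyc.
case: (boolP [exists x, (10 <= #|Defs.comp F2 x|) && (4 <= #|C :&: Defs.comp F2 x|)]).
  case/existsP => x /andP[h1 h2]; exists (Defs.comp F2 x); split => //.
  by exists x.
move/existsPn => hn; exfalso.
have [x0 hC] := hcyc.
have Hneg : forall x, 10 <= #|Defs.comp F2 x| -> #|C :&: Defs.comp F2 x| < 4.
  move=> x h; have := hn x; rewrite h /= -ltnNge; done.
exact: (final eirr esy ecub hcol tf1 tf2 Msub hC (hchl C hcyc) Hneg no4 (lo C hcyc)).
Qed.
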